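(* In an MFQST with degree bound $\phi=3$, every Steiner point has degree exactly $3$.
   Context: Let $Z=\{z_1,\dots,z_n\}\subset\mathbb{R}^2$ ($n\ge 1$) be a set of sources and $z_{BS}\in\mathbb{R}^2\setminus Z$ a sink; each source has supply $1$. A flow-dependent quadratic Steiner tree (FQST) consists of a finite set $S\subset\mathbb{R}^2$ of Steiner points and a tree $T$ with vertex set $Z\cup S\cup\{z_{BS}\}$ whose edges are directed towards $z_{BS}$. Every node other than the sink has exactly one out-edge, and the sink has none. Each edge $e$ carries a positive flow $f(e)$ such that: - at each source, the flow on its out-edge minus the total flow on its in-edges equals $1$; - at each Steiner point, the out-flow equals the total in-flow; - the sink receives total flow $n$. The cost is $L(T)=\sum_{e\in E(T)} f(e)|e|^2$. An MFQST with degree bound $\phi$ is an FQST minimising $L$ among all FQSTs (any finite $S$, any topology) in which every Steiner point has degree at least $\phi$. *)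

(* Defs.v *)
From Stdlib Require Import Reals Lra Lia List Arith.
Import ListNotations.
Open Scope R_scope.

(* Node numbering for an FQST with n sources and m Steiner points:
     0 .. n-1         : sources z_1..z_n
     n .. n+m-1       : Steiner points
     n+m              : the sink z_BS.
   Every non-sink node v has exactly one out-edge v -> par v; the edge is
   identified with its tail v and carries flow (flow v). *)

Definition point := (R * R)%type.

Definition sqdist (p q : point) : R :=
  (fst p - fst q) ^ 2 + (snd p - snd q) ^ 2.

Record FQST := mkFQST {
  nst  : nat;
  spt  : nat -> point;
  par  : nat -> nat;
  flow : nat -> R
}.

Section FQSTDefs.
Variables (n : nat) (z : nat -> point) (zBS : point).

Definition sinkIdx (T : FQST) : nat := (n + nst T)%nat.

Definition pos (T : FQST) (v : nat) : point :=
  if Nat.ltb v n then z v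
  else if Nat.ltb v (sinkIdx T) then spt T (v - n)
  else zBS.

Definition children (T : FQST) (v : nat) : list nat :=
  filter (fun u => Nat.eqb (par T u) v) (seq 0 (sinkIdx T)).

Definition inflow (T : FQST) (v : nat) : R :=
  fold_right Rplus 0 (map (flow T) (children T v)).

(* degree of a non-sink node: its in-edges plus its single out-edge *)
Definition degree (T : FQST) (v : nat) : nat :=
  S (length (children T v)).

Definition is_FQST (T : FQST) : Prop :=
  (forall u v, (u <= sinkIdx T)%nat -> (v <= sinkIdx T)%nat ->
     pos T u = pos T v -> u = v) /\
  (forall v, (v < sinkIdx T)%nat -> (par T v <= sinkIdx T)%nat /\ par T v <> v) /\
  (* T is a tree directed towards the sink: following out-edges
     from any node reaches the sink *)
  (forall v, (v < sinkIdx T)%nat -> exists k, Nat.iter k (par T) v = sinkIdx T) /\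
  (forall v, (v < sinkIdx T)%nat -> 0 < flow T v) /\
  (forall v, (v < n)%nat -> flow T v - inflow T v = 1) /\
  (forall v, (n <= v < sinkIdx T)%nat -> flow T v = inflow T v) /\
  inflow T (sinkIdx T) = INR n.

Definition cost (T : FQST) : R :=
  fold_right Rplus 0
    (map (fun v => flow T v * sqdist (pos T v) (pos T (par T v)))
         (seq 0 (sinkIdx T))).

Definition steiner_deg_ge (phi : nat) (T : FQST) : Prop :=
  forall v, (n <= v < sinkIdx T)%nat -> (phi <= degree T v)%nat.

Definition is_MFQST (phi : nat) (T : FQST) : Prop :=
  is_FQST T /\ steiner_deg_ge phi T /\
  forall T', is_FQST T' -> steiner_deg_ge phi T' -> cost T <= cost T'.

End FQSTDefs.

(* Main.v *)
Require Import Defs.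
From Stdlib Require Import Reals List Arith Lra Lia.
Import ListNotations.
Import Defs.
Open Scope R_scope.

Definition Rsum (l : list nat) (f : nat -> R) : R := fold_right Rplus 0 (map f l).

Lemma Rsum_app l1 l2 f : Rsum (l1 ++ l2) f = Rsum l1 f + Rsum l2 f.
Proof. unfold Rsum; induction l1; simpl; [lra|rewrite IHl1; lra]. Qed.

Lemma Rsum_one a f : Rsum [a] f = f a.
Proof. unfold Rsum; simpl; lra. Qed.

Lemma Rsum_ext_in l f g : (forall u, In u l -> f u = g u) -> Rsum l f = Rsum l g.
Proof.
  unfold Rsum; induction l; simpl; intros H; auto.
  rewrite H by auto. rewrite IHl; auto.
Qed.

Lemma Rsum_plus l f g : Rsum l (fun u => f u + g u) = Rsum l f + Rsum l g.
Proof. unfold Rsum; induction l; simpl; [lra|rewrite IHl; lra]. Qed.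

Lemma Rsum_minus l f g : Rsum l (fun u => f u - g u) = Rsum l f - Rsum l g.
Proof. unfold Rsum; induction l; simpl; [lra|rewrite IHl; lra]. Qed.

Lemma Rsum_delta_notin l c f : ~ In c l -> Rsum l (fun u => if u =? c then f u else 0) = 0.
Proof.
  unfold Rsum; induction l; simpl; intros H; auto.
  destruct (Nat.eqb_spec a c). exfalso; auto. rewrite IHl; auto; lra.
Qed.

Lemma Rsum_delta l c f : NoDup l -> In c l -> Rsum l (fun u => if u =? c then f u else 0) = f c.
Proof.
  induction l; simpl; intros Hn Hi; [contradiction|].
  inversion Hn; subst.
  destruct (Nat.eqb_spec a c).
  - subst c. unfold Rsum at 1; simpl. rewrite Nat.eqb_refl.
    fold (Rsum l (fun u => if u =? a then f u else 0)).
    rewrite Rsum_delta_notin; auto; lra.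
  - destruct Hi as [Hi|Hi]; [congruence|].
    unfold Rsum at 1; simpl. destruct (Nat.eqb_spec a c); [congruence|].
    fold (Rsum l (fun u => if u =? c then f u else 0)). rewrite IHl; auto; lra.
Qed.

Lemma filter_sum (p : nat -> bool) f l :
  fold_right Rplus 0 (map f (filter p l)) = Rsum l (fun u => if p u then f u else 0).
Proof.
  unfold Rsum; induction l; simpl; auto.
  destruct (p a); simpl; rewrite IHl; lra.
Qed.

Lemma filter_len (p : nat -> bool) l :
  INR (length (filter p l)) = Rsum l (fun u => if p u then 1 else 0).
Proof.
  unfold Rsum; induction l; simpl; auto.
  destruct (p a); cbn [length]; rewrite <- IHl; [rewrite S_INR|]; lra.
Qed.

Lemma Rsum_pos_min (l : list nat) (g : nat -> R) :
  (forall u, In u l -> 0 < g u) -> exists e, 0 < e /\ forall u, In u l -> e <= g u.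
Proof.
  induction l; simpl; intros H.
  - exists 1; split; [lra| intros _ []].
  - destruct IHl as [e [He Hl]]; auto.
    exists (Rmin e (g a)); split.
    + apply Rmin_glb_lt; auto.
    + intros u [<-|Hu]; [apply Rmin_r|]. eapply Rle_trans; [apply Rmin_l|auto].
Qed.

Section Split.
Variables (n : nat) (z : nat -> point) (zBS : point) (T : FQST).
Variables (v c1 c2 : nat) (x : point).

Definition NN := sinkIdx n T.

Definition par' (u : nat) : nat :=
  if orb (u =? c1) (u =? c2) then NN
  else if u =? NN then v
  else if par T u =? NN then S NN else par T u.
Definition flow' (u : nat) : R :=
  if u =? NN then flow T c1 + flow T c2 else flow T u.
Definition spt' (i : nat) : point := if i =? nst T then x else spt T i.
Definition T' : FQST := mkFQST (S (nst T)) spt' par' flow'.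

Hypothesis HT : is_FQST n z zBS T.
Hypothesis Hv : (n <= v < NN)%nat.
Hypothesis Hc1 : (c1 < NN)%nat.
Hypothesis Hc2 : (c2 < NN)%nat.
Hypothesis Hp1 : par T c1 = v.
Hypothesis Hp2 : par T c2 = v.
Hypothesis H12 : c1 <> c2.

Lemma sink' : sinkIdx n T' = S NN.
Proof. unfold sinkIdx, NN, sinkIdx; simpl; lia. Qed.

Lemma Hpar u : (u < NN)%nat -> (par T u <= NN)%nat /\ par T u <> u.
Proof. destruct HT as [_ [H _]]. apply H. Qed.

Lemma vc1 : v <> c1.
Proof. intro E. destruct (Hpar c1 Hc1). congruence. Qed.
Lemma vc2 : v <> c2.
Proof. intro E. destruct (Hpar c2 Hc2). congruence. Qed.

Lemma par'_N : par' NN = v.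
Proof.
  unfold par'. destruct (Nat.eqb_spec NN c1); [lia|]. destruct (Nat.eqb_spec NN c2); [lia|].
  simpl. now rewrite Nat.eqb_refl.
Qed.

Lemma par'_cases u : (u < NN)%nat ->
  ((u = c1 \/ u = c2) /\ par' u = NN) \/
  (u <> c1 /\ u <> c2 /\ par T u = NN /\ par' u = S NN) \/
  (u <> c1 /\ u <> c2 /\ par T u <> NN /\ (par T u < NN)%nat /\ par' u = par T u).
Proof.
  intros Hu. unfold par'.
  destruct (Nat.eqb_spec u c1); [left; auto|].
  destruct (Nat.eqb_spec u c2); [left; auto|]. simpl.
  destruct (Nat.eqb_spec u NN); [lia|].
  destruct (Nat.eqb_spec (par T u) NN); [right; left; auto|].
  right; right. destruct (Hpar u Hu). repeat split; auto; lia.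
Qed.

Lemma flow'_lt u : (u < NN)%nat -> flow' u = flow T u.
Proof. intros. unfold flow'. destruct (Nat.eqb_spec u NN); [lia|auto]. Qed.

Lemma pos'_lt u : (u < NN)%nat -> pos n z zBS T' u = pos n z zBS T u.
Proof.
  intros Hu. unfold pos. rewrite sink'. fold NN.
  destruct (Nat.ltb_spec u n); auto.
  destruct (Nat.ltb_spec u (S NN)); [|lia].
  destruct (Nat.ltb_spec u NN); [|lia].
  simpl. unfold spt'. destruct (Nat.eqb_spec (u - n) (nst T)); auto.
  unfold NN, sinkIdx in Hu. lia.
Qed.

Lemma pos'_N : pos n z zBS T' NN = x.
Proof.
  unfold pos. rewrite sink'.
  destruct (Nat.ltb_spec NN n). unfold NN, sinkIdx in *; lia.
  destruct (Nat.ltb_spec NN (S NN)); [|lia].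
  simpl. unfold spt'. destruct (Nat.eqb_spec (NN - n) (nst T)); auto.
  unfold NN, sinkIdx in *; lia.
Qed.

Lemma pos_N : pos n z zBS T NN = zBS.
Proof.
  unfold pos. fold NN. destruct (Nat.ltb_spec NN n). unfold NN, sinkIdx in *; lia.
  destruct (Nat.ltb_spec NN NN); [lia|auto].
Qed.

Lemma pos'_SN : pos n z zBS T' (S NN) = pos n z zBS T NN.
Proof.
  rewrite pos_N. unfold pos. rewrite sink'.
  destruct (Nat.ltb_spec (S NN) n). unfold NN, sinkIdx in *; lia.
  destruct (Nat.ltb_spec (S NN) (S NN)); [lia|auto].
Qed.

Ltac dec := repeat match goal with
  | |- context [?a =? ?b] => destruct (Nat.eqb_spec a b)
  end.

Lemma P1 (f : nat -> R) w u : w <> v -> w <> NN -> w <> S NN -> (u < NN)%nat ->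
  (if par' u =? w then f u else 0) = (if par T u =? w then f u else 0).
Proof.
  intros H1 H2 H3 Hu.
  destruct (par'_cases u Hu) as [[[E|E] F]|[[A [B [C D]]]|[A [B [C [D E]]]]]];
    rewrite ?F, ?D, ?E; dec; subst; try rewrite ?Hp1, ?Hp2 in *; try lia; auto.
Qed.

Lemma P2 (f : nat -> R) u : (u < NN)%nat ->
  (if par' u =? v then f u else 0) =
  (if par T u =? v then f u else 0) - (if u =? c1 then f u else 0) - (if u =? c2 then f u else 0).
Proof.
  intros Hu. pose proof vc1. pose proof vc2.
  destruct (par'_cases u Hu) as [[[E|E] F]|[[A [B [C D]]]|[A [B [C [D E]]]]]];
    rewrite ?F, ?D, ?E; dec; subst; try rewrite ?Hp1, ?Hp2 in *; try lia; lra.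
Qed.

Lemma P3 (f : nat -> R) u : (u < NN)%nat ->
  (if par' u =? NN then f u else 0) =
  (if u =? c1 then f u else 0) + (if u =? c2 then f u else 0).
Proof.
  intros Hu.
  destruct (par'_cases u Hu) as [[[E|E] F]|[[A [B [C D]]]|[A [B [C [D E]]]]]];
    rewrite ?F, ?D, ?E; dec; subst; try lia; lra.
Qed.

Lemma P4 (f : nat -> R) u : (u < NN)%nat ->
  (if par' u =? S NN then f u else 0) = (if par T u =? NN then f u else 0).
Proof.
  intros Hu.
  destruct (par'_cases u Hu) as [[[E|E] F]|[[A [B [C D]]]|[A [B [C [D E]]]]]];
    rewrite ?F, ?D, ?E; dec; subst; try rewrite ?Hp1, ?Hp2 in *; try lia; lra.
Qed.


Lemma inflow_T w : inflow n T w = Rsum (seq 0 NN) (fun u => if par T u =? w then flow T u else 0).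
Proof. unfold inflow, children. rewrite filter_sum. reflexivity. Qed.

Lemma inflow'_split w : inflow n T' w =
  Rsum (seq 0 NN) (fun u => if par' u =? w then flow T u else 0) + (if v =? w then flow' NN else 0).
Proof.
  unfold inflow, children. rewrite filter_sum, sink', seq_S, Rsum_app, Rsum_one. simpl.
  rewrite par'_N. f_equal. apply Rsum_ext_in. intros u Hu. apply in_seq in Hu.
  rewrite flow'_lt by lia. reflexivity.
Qed.

Lemma len_T w : INR (length (children n T w)) = Rsum (seq 0 NN) (fun u => if par T u =? w then 1 else 0).
Proof. unfold children. rewrite filter_len. reflexivity. Qed.

Lemma len'_split w : INR (length (children n T' w)) =
  Rsum (seq 0 NN) (fun u => if par' u =? w then 1 else 0) + (if v =? w then 1 else 0).
Proof.
  unfold children. rewrite filter_len, sink', seq_S, Rsum_app, Rsum_one. simpl.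
  rewrite par'_N. reflexivity.
Qed.

Lemma ND : NoDup (seq 0 NN).
Proof. apply seq_NoDup. Qed.
Lemma In1 : In c1 (seq 0 NN).
Proof. apply in_seq; lia. Qed.
Lemma In2 : In c2 (seq 0 NN).
Proof. apply in_seq; lia. Qed.

Lemma gen_other (f : nat -> R) w : w <> v -> w <> NN -> w <> S NN ->
  Rsum (seq 0 NN) (fun u => if par' u =? w then f u else 0) =
  Rsum (seq 0 NN) (fun u => if par T u =? w then f u else 0).
Proof.
  intros. apply Rsum_ext_in. intros u Hu; apply in_seq in Hu. apply P1; auto; lia.
Qed.

Lemma gen_v (f : nat -> R) :
  Rsum (seq 0 NN) (fun u => if par' u =? v then f u else 0) =
  Rsum (seq 0 NN) (fun u => if par T u =? v then f u else 0) - f c1 - f c2.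
Proof.
  rewrite (Rsum_ext_in _ _ (fun u => ((if par T u =? v then f u else 0) - (if u =? c1 then f u else 0)) - (if u =? c2 then f u else 0))).
  - rewrite !Rsum_minus, !Rsum_delta; auto using ND, In1, In2.
  - intros u Hu; apply in_seq in Hu. apply P2; lia.
Qed.

Lemma gen_N (f : nat -> R) :
  Rsum (seq 0 NN) (fun u => if par' u =? NN then f u else 0) = f c1 + f c2.
Proof.
  rewrite (Rsum_ext_in _ _ (fun u => (if u =? c1 then f u else 0) + (if u =? c2 then f u else 0))).
  - rewrite !Rsum_plus, !Rsum_delta; auto using ND, In1, In2.
  - intros u Hu; apply in_seq in Hu. apply P3; lia.
Qed.

Lemma gen_SN (f : nat -> R) :
  Rsum (seq 0 NN) (fun u => if par' u =? S NN then f u else 0) =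
  Rsum (seq 0 NN) (fun u => if par T u =? NN then f u else 0).
Proof.
  apply Rsum_ext_in. intros u Hu; apply in_seq in Hu. apply P4; lia.
Qed.

Lemma inflow'_eq w : (w <= S NN)%nat -> w <> NN ->
  inflow n T' w = inflow n T (if w =? S NN then NN else w).
Proof.
  intros Hw HwN. rewrite inflow'_split, inflow_T.
  destruct (Nat.eqb_spec w (S NN)).
  - subst. rewrite gen_SN. destruct (Nat.eqb_spec v (S NN)); [lia|lra].
  - destruct (Nat.eqb_spec w v).
    + subst. rewrite gen_v, Nat.eqb_refl. unfold flow'. rewrite Nat.eqb_refl. lra.
    + rewrite gen_other by auto. destruct (Nat.eqb_spec v w); [lia|lra].
Qed.

Lemma inflow'_N : inflow n T' NN = flow T c1 + flow T c2.
Proof.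
  rewrite inflow'_split, gen_N. destruct (Nat.eqb_spec v NN); [lia|lra].
Qed.

Hypothesis Hdeg : steiner_deg_ge n 3 T.
Hypothesis Hcnt : (3 <= length (children n T v))%nat.

Lemma deg' : steiner_deg_ge n 3 T'.
Proof.
  intros w Hw. rewrite sink' in Hw. unfold degree.
  enough (2 <= length (children n T' w))%nat by lia.
  apply INR_le. rewrite len'_split. simpl (INR 2).
  destruct (Nat.eqb_spec w NN).
  - subst. rewrite gen_N. destruct (Nat.eqb_spec v NN); [lia|lra].
  - destruct (Nat.eqb_spec w v).
    + subst. rewrite gen_v, Nat.eqb_refl, <- len_T.
      apply le_INR in Hcnt. simpl (INR 3) in Hcnt. lra.
    + rewrite gen_other, <- len_T by lia.
      assert (Hd := Hdeg w ltac:(fold NN; lia)). unfold degree in Hd.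
      assert (2 <= length (children n T w))%nat by lia. apply le_INR in H. simpl (INR 2) in H.
      destruct (Nat.eqb_spec v w); [lia|lra].
Qed.


Lemma reach_aux k : forall u, (u < NN)%nat -> Nat.iter k (par T) u = NN ->
  exists k', Nat.iter k' par' u = S NN.
Proof.
  induction k; intros u Hu H.
  - simpl in H. lia.
  - rewrite Nat.iter_succ_r in H. destruct (Hpar u Hu) as [Hp Hne].
    destruct (par'_cases u Hu) as [[[E|E] F]|[[A [B [C D]]]|[A [B [C [D E]]]]]].
    + subst u. rewrite Hp1 in H. destruct (IHk v ltac:(lia) H) as [k' Hk'].
      exists (S (S k')). rewrite !Nat.iter_succ_r, F, par'_N. auto.
    + subst u. rewrite Hp2 in H. destruct (IHk v ltac:(lia) H) as [k' Hk'].
      exists (S (S k')). rewrite !Nat.iter_succ_r, F, par'_N. auto.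
    + exists 1%nat. simpl. auto.
    + destruct (IHk (par T u) D H) as [k' Hk']. exists (S k').
      rewrite Nat.iter_succ_r, E. auto.
Qed.

Hypothesis Hx : forall u, (u <= NN)%nat -> pos n z zBS T u <> x.

Lemma isF' : is_FQST n z zBS T'.
Proof.
  pose proof HT as HT0.
  destruct HT0 as [Hd [Hpb [Hr [Hf [Hs [Hst Hsk]]]]]].
  fold NN in Hd, Hpb, Hr, Hf, Hs, Hst, Hsk.
  split; [|split; [|split; [|split; [|split; [|split]]]]]; try rewrite sink'.
  - intros u w Hu Hw Heq.
    assert (Hc : forall a, (a <= S NN)%nat -> (a < NN)%nat \/ a = NN \/ a = S NN) by (intros; lia).
    destruct (Hc u Hu) as [Ha|[Ha|Ha]]; destruct (Hc w Hw) as [Hb|[Hb|Hb]]; subst;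
      rewrite ?pos'_N, ?pos'_SN in Heq; rewrite ?pos'_lt in Heq by auto; auto.
    all: try (exfalso; eapply Hx; [|eassumption]; lia).
    all: try (exfalso; eapply Hx; [|symmetry; eassumption]; lia).
    all: try (apply Hd; auto; lia).
    all: try (assert (u = NN) by (apply Hd; auto; lia); lia).
    all: try (assert (NN = w) by (apply Hd; auto; lia); lia).
  - intros u Hu. simpl. destruct (Nat.eqb_spec u NN).
    + subst. rewrite par'_N. lia.
    + destruct (par'_cases u ltac:(lia)) as [[[E|E] F]|[[A [B [C D]]]|[A [B [C [D E]]]]]]; pose proof (Hpb u ltac:(lia)); lia.
  - intros u Hu. simpl. destruct (Nat.eqb_spec u NN).
    + subst. destruct (Hr v ltac:(lia)) as [k Hk].
      destruct (reach_aux k v ltac:(lia) Hk) as [k' Hk'].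
      exists (S k'). rewrite Nat.iter_succ_r, par'_N. auto.
    + destruct (Hr u ltac:(lia)) as [k Hk]. apply (reach_aux k); auto; lia.
  - intros u Hu. simpl. unfold flow'. destruct (Nat.eqb_spec u NN).
    + pose proof (Hf c1 Hc1); pose proof (Hf c2 Hc2); lra.
    + apply Hf; lia.
  - intros u Hu. simpl. rewrite flow'_lt by (unfold NN, sinkIdx; lia).
    rewrite inflow'_eq by (unfold NN, sinkIdx in *; lia).
    destruct (Nat.eqb_spec u (S NN)); [unfold NN, sinkIdx in *; lia|]. apply Hs; auto.
  - intros u Hu. simpl. destruct (Nat.eqb_spec u NN).
    + subst. rewrite inflow'_N. unfold flow'. rewrite Nat.eqb_refl. auto.
    + rewrite flow'_lt by lia. rewrite inflow'_eq by lia.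
      destruct (Nat.eqb_spec u (S NN)); [lia|]. apply Hst; lia.
  - rewrite inflow'_eq by lia. rewrite Nat.eqb_refl. auto.
Qed.

Lemma cost' : cost n z zBS T' = cost n z zBS T
  + flow T c1 * (sqdist (pos n z zBS T c1) x - sqdist (pos n z zBS T c1) (pos n z zBS T v))
  + flow T c2 * (sqdist (pos n z zBS T c2) x - sqdist (pos n z zBS T c2) (pos n z zBS T v))
  + (flow T c1 + flow T c2) * sqdist x (pos n z zBS T v).
Proof.
  pose proof HT as HT0.
  destruct HT0 as [Hd [Hpb _]]. fold NN in Hpb.
  set (g := fun u => flow T u * (sqdist (pos n z zBS T u) x - sqdist (pos n z zBS T u) (pos n z zBS T v))).
  change (cost n z zBS T') with (Rsum (seq 0 (sinkIdx n T'))
     (fun u => flow T' u * sqdist (pos n z zBS T' u) (pos n z zBS T' (par T' u)))).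
  change (cost n z zBS T) with (Rsum (seq 0 NN)
     (fun u => flow T u * sqdist (pos n z zBS T u) (pos n z zBS T (par T u)))).
  rewrite sink', seq_S, Rsum_app, Rsum_one. simpl (par T' _). simpl (flow T' _).
  rewrite Nat.add_0_l, par'_N, pos'_N, (pos'_lt v) by lia.
  unfold flow' at 2. rewrite Nat.eqb_refl.
  rewrite (Rsum_ext_in _ _ (fun u => (flow T u * sqdist (pos n z zBS T u) (pos n z zBS T (par T u))
       + (if u =? c1 then g u else 0)) + (if u =? c2 then g u else 0))).
  - rewrite !Rsum_plus, !Rsum_delta; auto using ND, In1, In2. 
  - intros u Hu; apply in_seq in Hu. rewrite flow'_lt, pos'_lt by lia.
    destruct (par'_cases u ltac:(lia)) as [[[E|E] F]|[[A [B [C D]]]|[A [B [C [D E]]]]]].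
    + subst u. rewrite F, pos'_N. unfold g. rewrite Hp1. dec; try lia. lra.
    + subst u. rewrite F, pos'_N. unfold g. rewrite Hp2. dec; try lia. lra.
    + rewrite D, pos'_SN, C. dec; try lia. lra.
    + rewrite E, pos'_lt by auto. dec; try lia. lra.
Qed.

End Split.

Definition dx (n : nat) z zBS (T : FQST) v a b :=
  flow T a * (fst (pos n z zBS T a) - fst (pos n z zBS T v)) +
  flow T b * (fst (pos n z zBS T b) - fst (pos n z zBS T v)).
Definition dy (n : nat) z zBS (T : FQST) v a b :=
  flow T a * (snd (pos n z zBS T a) - snd (pos n z zBS T v)) +
  flow T b * (snd (pos n z zBS T b) - snd (pos n z zBS T v)).

Lemma pair_ok n z zBS T v a : is_FQST n z zBS T -> (a < sinkIdx n T)%nat -> (v < sinkIdx n T)%nat ->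
  par T a = v ->
  flow T a * (fst (pos n z zBS T a) - fst (pos n z zBS T v)) = 0 ->
  flow T a * (snd (pos n z zBS T a) - snd (pos n z zBS T v)) = 0 -> False.
Proof.
  intros [Hd [Hpb [_ [Hf _]]]] Ha Hv Hp E1 E2.
  assert (0 < flow T a) by auto.
  apply Rmult_integral in E1; destruct E1 as [E1|E1]; [lra|].
  apply Rmult_integral in E2; destruct E2 as [E2|E2]; [lra|].
  assert (pos n z zBS T a = pos n z zBS T v).
  { destruct (pos n z zBS T a), (pos n z zBS T v); simpl in *. f_equal; lra. }
  apply Hd in H0; try lia. destruct (Hpb a Ha). congruence.
Qed.

Lemma choose_pair n z zBS T v : is_FQST n z zBS T -> (v < sinkIdx n T)%nat ->
  (3 <= length (children n T v))%nat ->
  exists c1 c2, (c1 < sinkIdx n T)%nat /\ (c2 < sinkIdx n T)%nat /\ par T c1 = v /\ par T c2 = v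
   /\ c1 <> c2 /\ 0 < dx n z zBS T v c1 c2 ^ 2 + dy n z zBS T v c1 c2 ^ 2.
Proof.
  intros HT Hv Hl.
  assert (Hch : forall a, In a (children n T v) -> (a < sinkIdx n T)%nat /\ par T a = v).
  { intros a Ha. unfold children in Ha. apply filter_In in Ha. destruct Ha as [H1 H2].
    apply in_seq in H1. apply Nat.eqb_eq in H2. split; [lia|auto]. }
  assert (Hnd : NoDup (children n T v)) by (apply NoDup_filter, seq_NoDup).
  destruct (children n T v) as [|a [|b [|c rest]]] eqn:E; simpl in Hl; try lia.
  destruct (Hch a) as [Ha Pa]; [simpl; auto|].
  destruct (Hch b) as [Hb Pb]; [simpl; auto|].
  destruct (Hch c) as [Hc Pc]; [simpl; auto|].
  inversion Hnd as [|? ? Na Hnd1]; inversion Hnd1 as [|? ? Nb _]; subst.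
  assert (ab : a <> b) by (intro; apply Na; simpl; auto).
  assert (ac : a <> c) by (intro; apply Na; simpl; auto).
  assert (bc : b <> c) by (intro; apply Nb; simpl; auto).
  destruct (Req_dec (dx n z zBS T (par T a) a b ^ 2 + dy n z zBS T (par T a) a b ^ 2) 0) as [Z1|Z1].
  2:{ exists a, b. repeat split; auto; try congruence.
      pose proof (pow2_ge_0 (dx n z zBS T (par T a) a b)).
      pose proof (pow2_ge_0 (dy n z zBS T (par T a) a b)). lra. }
  destruct (Req_dec (dx n z zBS T (par T a) a c ^ 2 + dy n z zBS T (par T a) a c ^ 2) 0) as [Z2|Z2].
  2:{ exists a, c. repeat split; auto; try congruence.
      pose proof (pow2_ge_0 (dx n z zBS T (par T a) a c)).
      pose proof (pow2_ge_0 (dy n z zBS T (par T a) a c)). lra. }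
  destruct (Req_dec (dx n z zBS T (par T a) b c ^ 2 + dy n z zBS T (par T a) b c ^ 2) 0) as [Z3|Z3].
  2:{ exists b, c. repeat split; auto; try congruence.
      pose proof (pow2_ge_0 (dx n z zBS T (par T a) b c)).
      pose proof (pow2_ge_0 (dy n z zBS T (par T a) b c)). lra. }
  assert (sq : forall p q : R, p ^ 2 + q ^ 2 = 0 -> p = 0 /\ q = 0).
  { intros p q H. pose proof (pow2_ge_0 p). pose proof (pow2_ge_0 q).
    split; nra. }
  apply sq in Z1, Z2, Z3. unfold dx, dy in *.
  exfalso. apply (pair_ok n z zBS T (par T a) a HT Ha Hv eq_refl); lra.
Qed.

Lemma sqdist_pos p q : p <> q -> 0 < sqdist p q.
Proof.
  intros H. destruct p as [a b], q as [c d]. unfold sqdist; simpl.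
  pose proof (pow2_ge_0 (a - c)). pose proof (pow2_ge_0 (b - d)).
  destruct (Req_dec a c); destruct (Req_dec b d).
  - subst; congruence.
  - assert (b - d <> 0) by lra. assert (0 < (b - d) ^ 2) by nra. lra.
  - assert (a - c <> 0) by lra. assert (0 < (a - c) ^ 2) by nra. lra.
  - assert (a - c <> 0) by lra. assert (0 < (a - c) ^ 2) by nra. lra.
Qed.

Theorem mainTheorem8 (n : nat) (z : nat -> point) (zBS : point)
  (Hn : (1 <= n)%nat)
  (Hz : forall i j, (i < n)%nat -> (j < n)%nat -> z i = z j -> i = j)
  (Hbs : forall i, (i < n)%nat -> z i <> zBS)
  (T : FQST) (HT : is_MFQST n z zBS 3 T) :
  forall v, (n <= v < sinkIdx n T)%nat -> degree n T v = 3%nat.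
Proof.
  intros v Hv. destruct HT as [HF [Hdeg Hmin]].
  pose proof (Hdeg v Hv) as H3.
  destruct (Nat.eq_dec (degree n T v) 3) as [|Hne]; auto. exfalso.
  assert (Hcnt : (3 <= length (children n T v))%nat) by (unfold degree in *; lia).
  destruct (choose_pair n z zBS T v HF ltac:(lia) Hcnt)
    as [c1 [c2 [Hc1 [Hc2 [Hp1 [Hp2 [H12 HD]]]]]]].
  set (s := pos n z zBS T v) in *.
  set (a := dx n z zBS T v c1 c2) in *.
  set (b := dy n z zBS T v c1 c2) in *.
  set (D := a ^ 2 + b ^ 2) in *.
  set (F := flow T c1 + flow T c2).
  assert (HFp : 0 < F).
  { destruct HF as [_ [_ [_ [Hf _]]]]. pose proof (Hf c1 Hc1). pose proof (Hf c2 Hc2). unfold F; lra. }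
  destruct (Rsum_pos_min (seq 0 (S (sinkIdx n T)))
      (fun u => if u =? v then 1 else sqdist (pos n z zBS T u) s)) as [e [He Hel]].
  { intros u Hu. apply in_seq in Hu. destruct (Nat.eqb_spec u v); [lra|].
    apply sqdist_pos. intro E. destruct HF as [Hd _]. apply n0. apply Hd; auto; lia. }
  set (t := Rmin (/ (2 * F)) (Rmin 1 (e / (2 * D)))).
  assert (Ht1 : t <= / (2 * F)) by apply Rmin_l.
  assert (Ht2 : t <= 1) by (eapply Rle_trans; [apply Rmin_r|apply Rmin_l]).
  assert (Ht3 : t <= e / (2 * D)) by (eapply Rle_trans; [apply Rmin_r|apply Rmin_r]).
  assert (Ht0 : 0 < t).
  { apply Rmin_glb_lt; [apply Rinv_0_lt_compat; lra|].
    apply Rmin_glb_lt; [lra|]. apply Rdiv_lt_0_compat; lra. }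
  assert (HtF : t * F < 1).
  { assert (t * F <= / (2 * F) * F) by (apply Rmult_le_compat_r; lra).
    replace (/ (2 * F) * F) with (/2) in H by (field; lra). lra. }
  assert (HtD : t * t * D < e).
  { assert (t * D <= e / (2 * D) * D) by (apply Rmult_le_compat_r; lra).
    replace (e / (2 * D) * D) with (e / 2) in H by (field; lra).
    assert (t * t * D <= t * D).
    { replace (t * t * D) with (t * (t * D)) by ring.
      assert (0 <= t * D) by nra. nra. }
    lra. }
  set (x := (fst s + t * a, snd s + t * b)).
  assert (Hx : forall u, (u <= NN n T)%nat -> pos n z zBS T u <> x).
  { intros u Hu E.
    assert (Hsq : sqdist (pos n z zBS T u) s = t * t * D).
    { rewrite E. unfold x, sqdist, D; simpl. ring. }
    destruct (Nat.eqb_spec u v).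
    - subst u. fold s in Hsq. unfold sqdist in Hsq.
      assert (0 < t * t * D) by (apply Rmult_lt_0_compat; [nra|lra]).
      replace ((fst s - fst s) ^ 2 + (snd s - snd s) ^ 2) with 0 in Hsq by ring. lra.
    - assert (Hu' : In u (seq 0 (S (sinkIdx n T)))) by (apply in_seq; unfold NN in Hu; lia).
      specialize (Hel u Hu'). simpl in Hel. destruct (Nat.eqb_spec u v); [lia|]. lra. }
  assert (Hv' : (n <= v < NN n T)%nat) by (unfold NN; lia).
  pose proof (Hmin _ (isF' n z zBS T v c1 c2 x HF Hv' Hc1 Hc2 Hp1 Hp2 H12 Hcnt Hx)
                     (deg' n z zBS T v c1 c2 x HF Hv' Hc1 Hc2 Hp1 Hp2 H12 Hdeg Hcnt)) as Hle.
  rewrite (cost' n z zBS T v c1 c2 x HF Hv' Hc1 Hc2 Hp1 Hp2 H12 Hcnt) in Hle.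
  fold s in Hle. fold F in Hle.
  assert (Heq : flow T c1 * (sqdist (pos n z zBS T c1) x - sqdist (pos n z zBS T c1) s) +
     flow T c2 * (sqdist (pos n z zBS T c2) x - sqdist (pos n z zBS T c2) s) +
     F * sqdist x s = 2 * t * D * (t * F - 1)).
  { unfold x, sqdist, D, F, a, b, dx, dy; simpl. fold s. ring. }
  assert (0 < 2 * t * D) by (apply Rmult_lt_0_compat; lra).
  assert (2 * t * D * (t * F - 1) < 0).
  { apply Rmult_lt_0_compat with (r1 := 2 * t * D) (r2 := 1 - t * F) in H; [|lra]. nra. }
  lra.
Qed.
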